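(* There is an absolute constant $C>0$ such that for every $n\ge 2$ and all integers $b_1,\dots,b_n\ge 0$ with $b_1+\dots+b_n=n-1$, every equilibrium graph of $(b_1,\dots,b_n)$-BG in the SUM version has diameter at most $C\log n$.
   Context: Bounded budget network creation game $(b_1,\dots,b_n)$-BG: $n$ players with integer budgets $0\le b_i\le n-1$. A strategy of player $i$ is a set $S_i\subseteq\{1,\dots,n\}\setminus\{i\}$ with $|S_i|=b_i$; a profile is realized by the directed graph $G$ on $u_1,\dots,u_n$ with an arc $\overrightarrow{u_iu_j}$ iff $j\in S_i$. $U(G)$ is the undirected multigraph obtained by ignoring directions; $\operatorname{dist}(u,v)$ is the distance in $U(G)$, defined as $n^2$ between different components. SUM cost: $c_{SUM}(u)=\sum_v\operatorname{dist}(u,v)$. An equilibrium graph in the SUM version is a realization in which no vertex can decrease its SUM cost by changing its own strategy while the other strategies are fixed. The diameter is the maximum distance between two vertices. Logarithms are base 2. *)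

(* Defs.v *)
From mathcomp Require Import all_boot.
From Stdlib Require Import Reals.

Set Implicit Arguments.
Unset Strict Implicit.
Unset Printing Implicit Defensive.

(* A strategy profile for n players u_0,...,u_{n-1}: player i buys arcs to S i. *)
Definition profile (n : nat) := 'I_n -> {set 'I_n}.

Definition valid_profile (n : nat) (b : 'I_n -> nat) (S : profile n) : Prop :=
  forall i : 'I_n, i \notin S i /\ #|S i| = b i.

Definition uadj (n : nat) (S : profile n) : rel 'I_n :=
  fun x y => (y \in S x) || (x \in S y).

Definition walk_le (n : nat) (S : profile n) (k : nat) (u v : 'I_n) : bool :=
  [exists j : 'I_k.+1, [exists p : j.-tuple 'I_n,
     path (uadj S) u p && (last u p == v)]].

(* Distance in U(G): length of a shortest walk (any shortest walk has < n
   edges), and n^2 between different components. *)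
Definition dist (n : nat) (S : profile n) (u v : 'I_n) : nat :=
  if [exists k : 'I_n, walk_le S k u v]
  then \big[minn/n]_(k < n | walk_le S k u v) (k : nat)
  else n ^ 2.

Definition cost_sum (n : nat) (S : profile n) (u : 'I_n) : nat :=
  \sum_(v : 'I_n) dist S u v.

Definition deviate (n : nat) (S : profile n) (i : 'I_n) (T : {set 'I_n})
  : profile n := fun j => if j == i then T else S j.

Definition sum_equilibrium (n : nat) (b : 'I_n -> nat) (S : profile n) : Prop :=
  valid_profile b S /\
  forall (i : 'I_n) (T : {set 'I_n}), i \notin T -> #|T| = b i ->
    cost_sum S i <= cost_sum (deviate S i T) i.

Definition diameter (n : nat) (S : profile n) : nat :=
  \max_(u : 'I_n) \max_(v : 'I_n) dist S u v.

Definition log2 (x : R) : R := (ln x / ln 2)%R.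

(* Main.v *)
Require Import Defs.
From mathcomp Require Import all_boot.
From Stdlib Require Import Reals.
From mathcomp Require Import zify.
From Stdlib Require Import Lra.

Set Implicit Arguments.
Unset Strict Implicit.
Unset Printing Implicit Defensive.


Lemma bigmin_le (I : finType) (P : pred I) (F : I -> nat) m i0 :
  P i0 -> \big[minn/m]_(i | P i) F i <= F i0.
Proof.
move=> Pi0; have : i0 \in index_enum I by rewrite mem_index_enum.
elim: (index_enum I) => // x s IH; rewrite inE big_cons.
case/orP => [/eqP<-|/IH h]; first by rewrite Pi0 geq_minl.
by case: ifP => _ //; rewrite geq_min h orbT.
Qed.

Lemma bigmin_idx (I : finType) (P : pred I) (F : I -> nat) m :
  \big[minn/m]_(i | P i) F i <= m.
Proof. by apply: (big_rec (fun x => x <= m)) => // i x _ h; rewrite geq_min h orbT. Qed.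

Lemma bigmin_att (I : finType) (P : pred I) (F : I -> nat) m :
  (\big[minn/m]_(i | P i) F i == m) || [exists i, P i && (\big[minn/m]_(i | P i) F i == F i)].
Proof.
apply: (big_ind (fun x => (x == m) || [exists i, P i && (x == F i)])).
- by rewrite eqxx.
- move=> x y hx hy; rewrite /minn; case: ltnP => h.
  + by [].
  + by [].
- by move=> i Pi; apply/orP; right; apply/existsP; exists i; rewrite Pi eqxx.
Qed.

Section Dist.
Variables (n : nat) (S : profile n).
Local Notation e := (uadj S).
Local Notation d := (Defs.dist S).

Lemma uadj_sym : symmetric e.
Proof. by move=> x y; rewrite /uadj orbC. Qed.

Lemma walk_leP k u v :
  reflect (exists p, [/\ path e u p, last u p = v & size p <= k]) (walk_le S k u v).
Proof.
apply: (iffP idP).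
- case/existsP=> j /existsP [p /andP[hp /eqP hl]].
  by exists p; split => //; rewrite size_tuple -ltnS.
- case=> p [hp hl hs]. have hs' : size p < k.+1 by rewrite ltnS.
  apply/existsP; exists (Ordinal hs'); apply/existsP; exists (in_tuple p).
  by rewrite /= hp hl eqxx.
Qed.

Lemma walk_short u p : path e u p ->
  exists q, [/\ path e u q, last u q = last u p & size q < n].
Proof.
move=> hp; case: (shortenP hp) => q hq uq _; exists q; split => //.
have := card_uniqP uq => /= h.
have := max_card (mem (u :: q)); rewrite card_ord /= -h /=.
by [].
Qed.

Lemma dist_le u p : path e u p -> d u (last u p) <= size p.
Proof.
move=> hp.
have [q [hq hl hs]] : exists q, [/\ path e u q, last u q = last u p & size q <= size p /\ size q < n].
  case: (ltnP (size p) n) => h; first by exists p.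
  case: (walk_short hp) => q [hq hl hs]; exists q; split => //; split=> //; lia.
case: hs => hs1 hs2.
have hw : walk_le S (Ordinal hs2) u (last u p) by apply/walk_leP; exists q.
rewrite /Defs.dist; case: existsP => [_|[]]; last by exists (Ordinal hs2).
have := @bigmin_le _ (fun k : 'I_n => walk_le S k u (last u p)) (fun k => (k : nat)) n _ hw. move=> /= h; apply: leq_trans h _; exact: hs1.
Qed.

Lemma dist_le_sq u v : d u v <= n ^ 2.
Proof.
rewrite /Defs.dist; case: ifP => // _; apply: leq_trans (bigmin_idx _ _ _) _.
by case: n => // m; rewrite /expn /=; nia.
Qed.

Lemma dist_exact u v : connect e u v ->
  exists p, [/\ path e u p, last u p = v & size p = d u v].
Proof.
case/connectP=> p0 hp0 ->.
case: (walk_short hp0) => q [hq hl hs].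
have hw : walk_le S (Ordinal hs) u (last u p0) by apply/walk_leP; exists q; rewrite hl.
have hex : [exists k : 'I_n, walk_le S k u (last u p0)] by apply/existsP; exists (Ordinal hs).
have := @bigmin_att _ (fun k : 'I_n => walk_le S k u (last u p0)) (fun k => (k : nat)) n.
have hle := @bigmin_le _ (fun k : 'I_n => walk_le S k u (last u p0)) (fun k => (k : nat)) n _ hw.
case/orP => [/eqP h|/existsP [k /andP[hk /eqP hk2]]].
  by move: hle; rewrite h /= leqNgt hs.
case/walk_leP: hk => p [hp hlp hsp]; exists p; split => //.
apply/eqP; rewrite eqn_leq; apply/andP; split.
- by rewrite /Defs.dist hex hk2.
- by rewrite -hlp dist_le.
Qed.

Lemma dist_nconn u v : ~~ connect e u v -> d u v = n ^ 2.
Proof.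
move=> hc; rewrite /Defs.dist; case: existsP => // [[k /walk_leP [p [hp hl _]]]].
by case/negP: hc; apply/connectP; exists p.
Qed.

Lemma dist_conn u v : connect e u v -> d u v < n.
Proof.
case/connectP=> p hp ->; case: (walk_short hp) => q [hq hl hs].
by rewrite -hl; apply: leq_ltn_trans (dist_le hq) hs.
Qed.

Lemma dist_walk u v p : path e u p -> last u p = v -> d u v <= size p.
Proof. by move=> hp <-; apply: dist_le. Qed.

Lemma dist0 u : d u u = 0.
Proof. by apply/eqP; rewrite -leqn0; apply: (@dist_walk u u [::]). Qed.

Lemma dist1 u v : e u v -> d u v <= 1.
Proof. by move=> h; apply: (@dist_walk u v [:: v]) => //=; rewrite h. Qed.

Lemma dist_tri u v w : d u w <= d u v + d v w.
Proof.
case: (boolP (connect e u v)) => huv; last by rewrite (dist_nconn huv) (leq_trans (dist_le_sq _ _)) ?leq_addr.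
case: (boolP (connect e v w)) => hvw; last by rewrite (dist_nconn hvw) (leq_trans (dist_le_sq _ _)) ?leq_addl.
case: (dist_exact huv) => p [hp hl <-]; case: (dist_exact hvw) => q [hq hl2 <-].
rewrite -size_cat; apply: dist_walk; first by rewrite cat_path hp hl hq.
by rewrite last_cat hl.
Qed.

Lemma walk_rev u p : path e u p ->
  exists q, [/\ path e (last u p) q, last (last u p) q = u & size q = size p].
Proof.
elim: p u => [|x p IH] u /=; first by move=> _; exists [::].
case/andP=> hux hp; case: (IH x hp) => q [hq hl hs].
exists (rcons q u); rewrite rcons_path hq hl last_rcons size_rcons hs uadj_sym hux.
by split.
Qed.

Lemma connect_symS : connect_sym e.
Proof. exact: sym_connect_sym uadj_sym. Qed.

Lemma dist_sym_le u v : d v u <= d u v.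
Proof.
case: (boolP (connect e u v)) => huv; last by rewrite (dist_nconn huv) dist_le_sq.
case: (dist_exact huv) => p [hp hl <-]; case: (walk_rev hp) => q [hq hl2 <-].
by rewrite -hl; apply: dist_walk hq hl2.
Qed.

Lemma dist_sym u v : d u v = d v u.
Proof. by apply/eqP; rewrite eqn_leq !dist_sym_le. Qed.

Lemma dist_adj u v w : e u v -> d u w <= (d v w).+1.
Proof. by move=> h; apply: leq_trans (dist_tri u v w) _; rewrite -add1n leq_add2r dist1. Qed.

Lemma walk_split u p j : path e u p -> j <= size p ->
  [/\ path e u (take j p), last u (take j p) = nth u (u :: p) j,
      path e (nth u (u :: p) j) (drop j p) &
      last (nth u (u :: p) j) (drop j p) = last u p].
Proof.
elim: p u j => [|x p IH] u [|j] //= /andP[hux hp] hj.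
case: (IH x j hp hj) => h1 h2 h3 h4.
have hn : nth x (x :: p) j = nth u (x :: p) j by apply: set_nth_default.
by rewrite hux h1 h2 -hn h3 h4.
Qed.

Lemma shortest_step u y p : path e u p -> last u p = y -> size p = d u y ->
  path (fun x z => e x z && (d z y < d x y)) u p.
Proof.
elim: p u => [|x p IH] u //= /andP[hux hp] hl hs.
have h1 : d x y <= size p by rewrite -hl; apply: dist_le.
have h2 := dist_adj y hux.
have h3 : size p = d x y by apply/eqP; rewrite eqn_leq h1 andbT -ltnS hs h2.
by rewrite hux (IH x hp hl h3) -h3 -hs ltnSn.
Qed.

Definition SR u y x z := [&& e x z, d z y < d x y, d z y < d u y & (x == u) || (d x y < d u y)].

Lemma sr_aux u y p : forall x0, (x0 == u) || (d x0 y < d u y) ->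
  path (fun x z => e x z && (d z y < d x y)) x0 p ->
  all (fun z => d z y < d u y) p -> path (SR u y) x0 p.
Proof.
elim: p => [|x p IH] x0 //= hx0 /andP[/andP[h1 h2] hp] /andP[hx ha].
rewrite /SR h1 h2 hx hx0 /=; apply: IH => //; by rewrite hx orbT.
Qed.

Lemma shortest_path u y p : path e u p -> last u p = y -> size p = d u y ->
  path (SR u y) u p.
Proof.
move=> hp hl hs; have h := shortest_step hp hl hs.
have hall : all (fun z => d z y < d u y) p.
  have := @order_path_min _ (fun x z => d z y < d x y) u p.
  move=> H; apply: H; first by move=> a b c h1 h2; apply: ltn_trans h2 h1.
  by apply: sub_path h => a b /andP[].
by apply: sr_aux => //; rewrite eqxx.
Qed.

End Dist.



Section Dev.
Variable n : nat.
Implicit Types (S : profile n) (T : {set 'I_n}).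

Lemma dev_sub S o t T x z : S o :\ t \subset T -> z \in S x ->
  (x != o) || (z != t) -> z \in deviate S o T x.
Proof.
move=> hs hz hxz; rewrite /deviate; case: (x =P o) => [ex|nx] //.
subst x; rewrite eqxx /= in hxz.
by apply: (subsetP hs); rewrite !inE hxz.
Qed.

Lemma uadj_dev S o t T x z : S o :\ t \subset T -> uadj S x z ->
  ~~ ((x == o) && (z == t)) -> ~~ ((x == t) && (z == o)) -> uadj (deviate S o T) x z.
Proof.
move=> hs /orP[h|h] h1 h2; rewrite /uadj.
- by rewrite (dev_sub hs h) //; rewrite negb_and in h1.
- by rewrite (dev_sub hs h) ?orbT //; rewrite negb_and orbC in h2.
Qed.

Lemma uadj_dev_new S o T w : w \in T -> uadj (deviate S o T) o w.
Proof. by rewrite /uadj /deviate eqxx => ->. Qed.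

Lemma sum_ind (A : {set 'I_n}) : \sum_(y : 'I_n) ((y \in A) : nat) = #|A|.
Proof. rewrite -sum1_card [RHS]big_mkcond /=; apply: eq_bigr => i _; by case: (i \in A). Qed.

Lemma dev_lemma (b : 'I_n -> nat) S a bb c :
  sum_equilibrium b S -> (forall x y, connect (uadj S) x y) ->
  bb \in S a -> uadj S bb c -> c != a -> c \notin S a ->
  #|[set y | (Defs.dist S bb y < Defs.dist S a y) && (Defs.dist S c y < Defs.dist S bb y)]| <=
  #|[set y | (Defs.dist S bb y < Defs.dist S a y) && ~~ (Defs.dist S c y < Defs.dist S bb y)]|.
Proof.
case=> hval heq hconn hb hbc hca hcS.
set K := [set y | _ && _]; set BK := [set y | _ && _].
set T := c |: (S a :\ bb); set S' := deviate S a T.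
have hsub : S a :\ bb \subset T by apply: subsetUr.
have haS : a \notin S a by case: (hval a).
have hab : a != bb by apply/eqP => h; move: hb; rewrite -h (negbTE haS).
have haT : a \notin T by rewrite !inE negb_or eq_sym hca /= negb_and haS orbT.
have hcard : #|T| = b a.
  by case: (hval a) => _ <-; rewrite /T cardsU1 (cardsD1 bb (S a)) hb !inE (negbTE hcS) andbF.
have hcost := heq a T haT hcard.
have heab : uadj S a bb by rewrite /uadj hb.
have hac : uadj S' a c by apply: uadj_dev_new; rewrite !inE eqxx.
have hpt : forall y, Defs.dist S' a y + (y \in K) <= Defs.dist S a y + (y \in BK).
  move=> y; rewrite !inE.
  have hadj := dist_adj y heab.
  case: (ltnP (Defs.dist S bb y) (Defs.dist S a y)) => hB /=.
  - case: (ltnP (Defs.dist S c y) (Defs.dist S bb y)) => hK /=.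
    + case: (dist_exact (hconn c y)) => p [hp hl hs].
      have hp' : path (uadj S') c p.
        apply: sub_path (shortest_path hp hl hs) => x z /and4P[h1 h2 h3 h4].
        apply: (uadj_dev (t:=bb)) => //; apply/negP => /andP[/eqP ex /eqP ez]; subst x z.
        * case/orP: h4 => [/eqP h|h]; [by move/eqP: hca; rewrite h | clear -h hK hB; lia].
        * case/orP: h4 => [/eqP h|h]; [by move: hK; rewrite h ltnn | clear -h hK; lia].
      have := @dist_walk n S' a y (c :: p); rewrite /= hac hp' hl => /(_ isT erefl).
      move=> h; clear -h hs hK hB; lia.
    + case: (dist_exact (hconn bb y)) => p [hp hl hs].
      have hp' : path (uadj S') bb p.
        apply: sub_path (shortest_path hp hl hs) => x z /and4P[h1 h2 h3 h4].
        apply: (uadj_dev (t:=bb)) => //; apply/negP => /andP[/eqP ex /eqP ez]; subst x z.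
        * case/orP: h4 => [/eqP h|h]; [by move: hB; rewrite h ltnn | clear -h hB; lia].
        * clear -h2 hB; lia.
      have hcb : uadj S' c bb.
        apply: (uadj_dev (t:=bb)) => //; first by rewrite uadj_sym.
        * by rewrite negb_and hca.
        * by apply/negP => /andP[_ /eqP h]; move: hab; rewrite h eqxx.
      have := @dist_walk n S' a y [:: c, bb & p]; rewrite /= hac hcb hp' hl => /(_ isT erefl).
      move=> h; clear -h hs hB; lia.
  - case: (dist_exact (hconn a y)) => p [hp hl hs].
    have hp' : path (uadj S') a p.
      apply: sub_path (shortest_path hp hl hs) => x z /and4P[h1 h2 h3 h4].
      apply: (uadj_dev (t:=bb)) => //; apply/negP => /andP[/eqP ex /eqP ez]; subst x z; clear -h2 h3 hB; lia.
    have := dist_walk hp' hl; move=> h; clear -h hs; lia.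
have hsum : \sum_y (Defs.dist S' a y + (y \in K)) <= \sum_y (Defs.dist S a y + (y \in BK)).
  by apply: leq_sum => y _; exact: hpt y.
rewrite !big_split /= !sum_ind in hsum; move: hsum hcost; rewrite /cost_sum /S'; move=> h1 h2; rewrite -(leq_add2l (\sum_(v < n) Defs.dist (deviate S a T) a v)); apply: (leq_trans h1); rewrite leq_add2r; exact: h2.
Qed.


Lemma sum_indT (T : finType) (A : {pred T}) : \sum_(y : T) ((y \in A) : nat) = #|A|.
Proof. rewrite -sum1_card [RHS]big_mkcond /=; apply: eq_bigr => i _; by case: (i \in A). Qed.

Definition bridgeP S := forall o t, t \in S o -> ~~ connect (uadj (deviate S o (S o :\ t))) o t.

Lemma nest S p q r y : bridgeP S -> (forall x y, connect (uadj S) x y) ->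
  uadj S p q -> uadj S q r -> Defs.dist S p r = 2 ->
  Defs.dist S r y < Defs.dist S q y -> Defs.dist S q y < Defs.dist S p y.
Proof.
move=> hbr hconn hpq hqr hpr hry; rewrite ltnNge; apply/negP => hpy.
have hpr' : p != r by apply/eqP => h; move: hpr; rewrite h dist0.
have hqp : q != p.
  by apply/eqP => h; move: hpr (dist1 hqr); rewrite h => ->.
have key : forall o t, t \in S o -> ((o == q) && (t == r)) || ((o == r) && (t == q)) -> False.
  move=> o t hot hot'.
  set S0 := deviate S o (S o :\ t).
  have hsub : S o :\ t \subset S o :\ t := subxx _.
  have avoid : forall x z, uadj S x z -> ~~ ((x == q) && (z == r)) -> ~~ ((x == r) && (z == q)) -> uadj S0 x z.
    move=> x z hxz h1 h2; apply: (uadj_dev hsub hxz);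
    by case/orP: hot' => /andP[/eqP -> /eqP ->].
  case: (dist_exact (hconn r y)) => p1 [hp1 hl1 hs1].
  have c1 : connect (uadj S0) r y.
    apply/connectP; exists p1 => //.
    apply: sub_path (shortest_path hp1 hl1 hs1) => x z /and4P[h1 h2 h3 h4].
    apply: avoid => //; apply/negP => /andP[/eqP ex /eqP ez]; subst x z.
    + by rewrite ltnn in h3.
    + by move: (ltn_trans h2 hry); rewrite ltnn.
  case: (dist_exact (hconn p y)) => p2 [hp2 hl2 hs2].
  have c2 : connect (uadj S0) p y.
    apply/connectP; exists p2 => //.
    apply: sub_path (shortest_path hp2 hl2 hs2) => x z /and4P[h1 h2 h3 h4].
    apply: avoid => //; apply/negP => /andP[/eqP ex /eqP ez]; subst x z.
    + case/orP: h4 => [h|h]; first by rewrite h in hqp.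
      by move: (leq_trans h hpy); rewrite ltnn.
    + by move: (ltn_trans h2 hry); rewrite ltnn.
  have e3 : uadj S0 p q.
    apply: avoid => //; apply/negP => /andP[/eqP ex /eqP ez].
    + by rewrite ex eqxx in hqp.
    + by rewrite ex eqxx in hpr'.
  have c4 : connect (uadj S0) r q.
    apply: connect_trans c1 _; apply: connect_trans (connect1 e3).
    by rewrite connect_symS.
  move: (hbr o t hot); rewrite -/S0.
  case/orP: hot' => /andP[/eqP -> /eqP ->]; last by rewrite c4.
  by rewrite connect_symS c4.
by case/orP: hqr => h; [apply: (key q r) | apply: (key r q)]; rewrite ?h ?eqxx ?orbT.
Qed.

Definition arcs S := [set xy : 'I_n * 'I_n | xy.2 \in S xy.1].

Lemma card_arcs S : #|arcs S| = \sum_(i < n) #|S i|.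
Proof.
rewrite -sum_indT (eq_bigr (fun xy : 'I_n * 'I_n => ((xy.2 \in S xy.1) : nat))); last first.
  by move=> xy _; rewrite inE.
rewrite -(pair_bigA _ (fun i j => ((j \in S i) : nat))) /=.
by apply: eq_bigr => i _; exact: sum_indT.
Qed.

Lemma inj_lemma S (rho : 'I_n -> 'I_n) :
  (forall x, connect (uadj S) x (rho x)) -> (forall x y, connect (uadj S) x y -> rho x = rho y) ->
  exists phi : 'I_n -> 'I_n * 'I_n,
    [/\ {in [set x | rho x != x] &, injective phi},
        {subset phi @: [set x | rho x != x] <= arcs S} &
        forall o t, t \in S o -> (o, t) \notin phi @: [set x | rho x != x] ->
          forall x, connect (uadj (deviate S o (S o :\ t))) x (rho x)].
Proof.
move=> hr hrc.
have hpar : forall x, rho x != x -> exists z, uadj S x z && (Defs.dist S z (rho x) < Defs.dist S x (rho x)).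
  move=> x hx; case: (dist_exact (hr x)) => [[|z p]] [hp hl hs].
    by move: hx; rewrite -hl eqxx.
  by exists z; have := shortest_step hp hl hs => /= /andP[].
pose par x := odflt x [pick z | uadj S x z && (Defs.dist S z (rho x) < Defs.dist S x (rho x))].
have hparP : forall x, rho x != x -> uadj S x (par x) && (Defs.dist S (par x) (rho x) < Defs.dist S x (rho x)).
  move=> x hx; rewrite /par; case: pickP => [z hz|h] //=.
  by case: (hpar x hx) => z hz; rewrite h in hz.
pose phi x := if par x \in S x then (x, par x) else (par x, x).
have harc : forall x, rho x != x -> phi x \in arcs S.
  move=> x /hparP /andP[hu _]; rewrite /phi; case: ifP => h; rewrite inE //=.
  by move: hu; rewrite /uadj h.
have hrp : forall x, rho x != x -> rho (par x) = rho x.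
  move=> x /hparP /andP[hu _]; apply/esym/hrc; exact: connect1.
exists phi; split.
- move=> x x'; rewrite !inE => hx hx'.
  have [_ h1] := andP (hparP x hx); have [_ h2] := andP (hparP x' hx').
  rewrite /phi; case: ifP => _; case: ifP => _ [e1 e2] //.
  + have hrr : rho x' = rho x by rewrite -e2 hrp.
    rewrite e2 in h1; rewrite -e1 hrr in h2.
    by move: (ltn_trans h1 h2); rewrite ltnn.
  + have hrr : rho x' = rho x by rewrite -e1 hrp.
    rewrite e1 in h1; rewrite -e2 hrr in h2.
    by move: (ltn_trans h1 h2); rewrite ltnn.
- by move=> xy /imsetP [x hx ->]; apply: harc; rewrite inE in hx.
- move=> o t hot hnot.
  set S0 := deviate S o (S o :\ t).
  suff H : forall k x, Defs.dist S x (rho x) < k -> connect (uadj S0) x (rho x).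
    by move=> x; apply: (H _ x).
  elim=> [//|k IH] x hk.
  case: (boolP (rho x != x)) => hx; last by rewrite negbK in hx; rewrite (eqP hx) connect0.
  have [hu hlt] := andP (hparP x hx).
  have hphi := harc x hx.
  have hne : phi x != (o, t).
    by apply/eqP => h; case/negP: hnot; rewrite -h; apply: imset_f; rewrite inE.
  have hedge : uadj S0 x (par x).
    rewrite /phi in hne hphi; case: ifP hne hphi => hin hne hphi.
    + apply/orP; left; apply: dev_sub (subxx _) hin _.
      by move: hne; rewrite xpair_eqE negb_and.
    + apply/orP; right; rewrite inE /= in hphi; apply: dev_sub (subxx _) hphi _.
      by move: hne; rewrite xpair_eqE negb_and.
  apply: connect_trans (connect1 hedge) _; rewrite -(hrp x hx); apply: IH.
  by rewrite (hrp x hx); apply: leq_trans hlt _; rewrite -ltnS.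
Qed.

End Dev.



Section Conn.
Variable n : nat.
Implicit Types (S : profile n) (T : {set 'I_n}).

Lemma dev_mono S o (A B : {set 'I_n}) x z : A \subset B ->
  uadj (deviate S o A) x z -> uadj (deviate S o B) x z.
Proof.
move=> hAB; rewrite /uadj /deviate.
by case: (x =P o); case: (z =P o) => _ _ /orP[h|h]; rewrite ?(subsetP hAB _ h) ?h ?orbT.
Qed.

Lemma sum_const_ord (c : nat) : \sum_(i < n) c = n * c.
Proof. by rewrite big_const_ord iter_addn_0 mulnC. Qed.

Lemma connected (b : 'I_n -> nat) S : sum_equilibrium b S -> \sum_(i < n) b i = n - 1 ->
  forall x y, connect (uadj S) x y.
Proof.
move=> heq hsum; case: (heq) => hval hdev.
have hsz : \sum_(i < n) #|S i| = n - 1.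
  by rewrite -hsum; apply: eq_bigr => i _; case: (hval i).
move=> u v; apply/negPn/negP => huv.
have hsym := connect_symS S.
pose rho := root (uadj S).
have hr : forall x, connect (uadj S) x (rho x) by move=> x; apply: connect_root.
have hrc : forall x y, connect (uadj S) x y -> rho x = rho y.
  by move=> x y /(rootP hsym).
case: (inj_lemma hr hrc) => phi [hinj hsub hpres].
set N := [set x | rho x != x] in hinj hsub hpres.
have hdiff : rho u != rho v by apply/negP => /eqP /(rootP hsym); apply/negP.
have hN : #|N| + 2 <= n.
  have hs : N \subset ~: [set rho u; rho v].
    apply/subsetP => x; rewrite !inE => hx; apply/negP.
    by case/orP => /eqP hx'; move: hx; rewrite hx' /rho root_root // eqxx.
  have := subset_leq_card hs; have := cardsC [set rho u; rho v].
  rewrite cards2 hdiff card_ord; clear; lia.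
have himg : #|phi @: N| = #|N| := card_in_imset hinj.
have harcs : #|arcs S| = n - 1 by rewrite card_arcs.
have : ~~ (arcs S \subset phi @: N).
  apply/negP => hs; have := subset_leq_card hs; move: hN himg harcs; clear; lia.
case/subsetPn => [[o t]] hxy hnot; rewrite inE /= in hxy.
have hp := hpres o t hxy hnot.
have [w hw] : exists w, ~~ connect (uadj S) o w.
  case: (boolP (connect (uadj S) o u)) => hou; last by exists u.
  exists v; apply/negP => hov; case/negP: huv.
  by apply: connect_trans hov; rewrite hsym.
set T := w |: (S o :\ t); set S' := deviate S o T.
have hoS : o \notin S o by case: (hval o).
have hwo : w != o by apply/eqP => h; move: hw; rewrite h connect0.
have hwS : w \notin S o.
  by apply/negP => h; case/negP: hw; apply: connect1; rewrite /uadj h.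
have hoT : o \notin T by rewrite !inE negb_or eq_sym hwo /= negb_and hoS orbT.
have hcard : #|T| = b o.
  case: (hval o) => _ <-; rewrite /T cardsU1 (cardsD1 t (S o)) hxy !inE (negbTE hwS) andbF.
  by [].
have hcost := hdev o T hoT hcard.
set C := [set y | connect (uadj S) o y].
set N2 := n ^ 2.
have hwC : w \notin C by rewrite inE.
have hold : forall y, ((y \in ~: C) : nat) * N2 <= Defs.dist S o y.
  move=> y; rewrite !inE; case: (boolP (connect (uadj S) o y)) => h //=.
  by rewrite (dist_nconn h) mul1n.
have hconn' : forall y, y \in w |: C -> connect (uadj S') o y.
  move=> y; rewrite !inE; case/orP => [/eqP ->|hy].
    by apply: connect1; apply: uadj_dev_new; rewrite !inE eqxx.
  have hsub' : subrel (uadj (deviate S o (S o :\ t))) (connect (uadj S')).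
    move=> x z h; apply: connect1; apply: dev_mono h; exact: subsetUr.
  have h1 := connect_sub hsub' (hp y); have h2 := connect_sub hsub' (hp o).
  rewrite -(hrc _ _ hy) in h1.
  by apply: connect_trans h2 _; rewrite (connect_symS S').
have hnew : forall y, Defs.dist S' o y <= (n - 1) + ((y \in ~: (w |: C)) : nat) * N2.
  move=> y; case: (boolP (y \in w |: C)) => hy.
    have := dist_conn (hconn' y hy); rewrite inE hy /=; clear; lia.
  by rewrite inE hy mul1n (leq_trans (dist_le_sq _ _ _)) // leq_addl.
have s1 : \sum_y ((y \in ~: C) : nat) * N2 <= cost_sum S o.
  by apply: leq_sum => y _; apply: hold.
have s2 : cost_sum S' o <= \sum_(y < n) ((n - 1) + ((y \in ~: (w |: C)) : nat) * N2).
  by apply: leq_sum => y _; apply: hnew.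
rewrite big_split /= -big_distrl /= sum_indT sum_const_ord in s2.
rewrite -big_distrl /= sum_indT in s1.
have hc1 := cardsC C; have hc2 := cardsC (w |: C); rewrite cardsU1 hwC card_ord in hc1 hc2.
have hn : 0 < n by apply: (leq_ltn_trans (leq0n u) (ltn_ord u)).
have hnn : n * (n - 1) < N2 by rewrite /N2 /=; clear -hn; nia.
have e1 : #|~: C| = #|~: (w |: C)| + 1 by clear -hc1 hc2; lia.
rewrite e1 mulnDl mul1n in s1.
move: hcost s1 s2 hnn; rewrite /S'; clear; lia.
Qed.


Lemma bridge S : (forall x y, connect (uadj S) x y) -> \sum_(i < n) #|S i| = n - 1 -> bridgeP S.
Proof.
move=> hconn hsum o t hot; apply/negP => hc.
set S0 := deviate S o (S o :\ t).
have hsub : subrel (uadj S) (connect (uadj S0)).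
  move=> x z hxz.
  case: (boolP ((x == o) && (z == t))) => [/andP[/eqP -> /eqP ->] //|h1].
  case: (boolP ((x == t) && (z == o))) => [/andP[/eqP -> /eqP ->]|h2]; first by rewrite connect_symS.
  by apply: connect1; apply: uadj_dev (subxx _) hxz h1 h2.
have hconn0 : forall x y, connect (uadj S0) x y by move=> x y; exact: (connect_sub hsub (hconn x y)).
pose rho := fun _ : 'I_n => o.
have hr : forall x, connect (uadj S0) x (rho x) by move=> x; apply: hconn0.
have hrc : forall x y, connect (uadj S0) x y -> rho x = rho y by [].
case: (inj_lemma hr hrc) => phi [hinj hsub' _].
have himg := card_in_imset hinj.
have hle : #|phi @: [set x | rho x != x]| <= #|arcs S0|.
  by apply: subset_leq_card; apply/subsetP.
have hN : #|[set x | rho x != x]| = n.-1.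
  by have := cardsC1 o; rewrite card_ord => <-; apply: eq_card => x; rewrite !inE eq_sym.
have hS0 : \sum_(i < n) #|S0 i| + 1 = \sum_(i < n) #|S i|.
  rewrite (bigD1 o) //= [in RHS](bigD1 o) //= {1}/S0 /deviate eqxx.
  rewrite (cardsD1 t (S o)) hot.
  have -> : \sum_(i < n | i != o) #|S0 i| = \sum_(i < n | i != o) #|S i|.
    by apply: eq_bigr => i hi; rewrite /S0 /deviate (negbTE hi).
  by rewrite addnC addnA.
rewrite card_arcs in hle.
move: himg hle hN hS0 hsum; clear; lia.
Qed.

End Conn.



Section Half.
Variable n : nat.
Implicit Types (S : profile n).

Lemma halving (b : 'I_n -> nat) S (v : nat -> 'I_n) D y :
  sum_equilibrium b S -> (forall x z, connect (uadj S) x z) -> bridgeP S ->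
  (forall j, j < D -> uadj S (v j) (v j.+1)) ->
  (forall j, j <= D -> Defs.dist S (v j) y = D - j) ->
  expn 2 (\sum_(i < D.-1) ((v i.+1 \in S (v i)) : nat)) <= n.
Proof.
move=> heq hconn hbr hv hd.
pose B i := [set z | Defs.dist S (v i.+1) z < Defs.dist S (v i) z].
have d2 : forall i, i.+2 <= D -> Defs.dist S (v i) (v i.+2) = 2.
  move=> i hi; apply/eqP; rewrite eqn_leq; apply/andP; split.
    apply: (@dist_walk _ _ _ _ [:: v i.+1; v i.+2]) => //=.
    by rewrite hv ?hv //; apply: leq_trans hi.
  have := dist_tri S (v i) (v i.+2) y; rewrite !hd ?(ltnW (ltnW hi)) //.
  move: hi; clear; lia.
have hnest : forall i, i.+2 <= D -> B i.+1 \subset B i.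
  move=> i hi; apply/subsetP => z; rewrite !inE => h.
  apply: (nest hbr hconn (hv i _) (hv i.+1 _) (d2 i hi)) h => //.
  by apply: leq_trans hi.
have hhalf : forall i, i.+2 <= D -> v i.+1 \in S (v i) -> 2 * #|B i.+1| <= #|B i|.
  move=> i hi hS.
  have hca : v i.+2 != v i by apply/eqP => h; move: (d2 i hi); rewrite h dist0.
  have hcS : v i.+2 \notin S (v i).
    apply/negP => h; have := dist1 (_ : uadj S (v i) (v i.+2)); rewrite /uadj h => /(_ isT).
    by rewrite d2.
  have := dev_lemma heq hconn hS (hv i.+1 hi) hca hcS.
  have e1 : [set z | (Defs.dist S (v i.+1) z < Defs.dist S (v i) z) &&
                     (Defs.dist S (v i.+2) z < Defs.dist S (v i.+1) z)] = B i :&: B i.+1.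
    by apply/setP => z; rewrite !inE.
  have e2 : [set z | (Defs.dist S (v i.+1) z < Defs.dist S (v i) z) &&
                     ~~ (Defs.dist S (v i.+2) z < Defs.dist S (v i.+1) z)] = B i :\: B i.+1.
    by apply/setP => z; rewrite !inE andbC.
  rewrite e1 e2 -(cardsID (B i.+1) (B i)) (setIidPr (hnest i hi)); clear; lia.
have hind : forall m, m <= D.-1 ->
    expn 2 (\sum_(i < m) ((v i.+1 \in S (v i)) : nat)) * #|B m| <= #|B 0|.
  elim=> [|m IH] hm; first by rewrite big_ord0 expn0 mul1n.
  have hm' : m.+2 <= D by move: hm; clear; lia.
  have hsub := subset_leq_card (hnest m hm').
  have := IH (ltnW hm); rewrite big_ord_recr /= expnD.
  case: (boolP (v m.+1 \in S (v m))) => h /= hI.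
  - apply: leq_trans hI; rewrite expn1 -mulnA leq_mul2l; apply/orP; right.
    exact: hhalf m hm' h.
  - by apply: leq_trans hI; rewrite expn0 muln1 leq_mul2l hsub orbT.
have hn : #|B 0| <= n by have := max_card (mem (B 0)); rewrite card_ord.
clear d2; case: D hv hd hnest hhalf hind => [|D] hv hd hnest hhalf hind.
  by rewrite big_ord0 expn0; apply: (leq_ltn_trans (leq0n y) (ltn_ord y)).
have hpos : 0 < #|B D|.
  apply/card_gt0P; exists y; rewrite inE !hd //; clear; lia.
have := hind D (leqnn _); rewrite /= => h.
apply: leq_trans hn; apply: leq_trans h; rewrite -{1}(muln1 (expn 2 _)) leq_mul2l hpos orbT //.
Qed.

End Half.



Section Pair.
Variable n : nat.
Implicit Types (S : profile n).

Lemma pair_bound (b : 'I_n -> nat) S u y :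
  sum_equilibrium b S -> \sum_(i < n) b i = n - 1 ->
  expn 2 (Defs.dist S u y - 2) <= n * n.
Proof.
move=> heq hsum.
have hconn := connected heq hsum.
have hsz : \sum_(i < n) #|S i| = n - 1.
  by rewrite -hsum; apply: eq_bigr => i _; case: heq => hval _; case: (hval i).
have hbr := bridge hconn hsz.
case: (dist_exact (hconn u y)) => p [hp hl hs].
set D := Defs.dist S u y in hs *.
pose v j := nth u (u :: p) j.
have hv : forall j, j < D -> uadj S (v j) (v j.+1).
  by move=> j hj; apply: (pathP u hp); rewrite hs.
have hpre : forall j, j <= D -> Defs.dist S u (v j) <= j.
  move=> j hj; rewrite -hs in hj; case: (walk_split hp hj) => h1 h2 _ _.
  by have := dist_walk h1 h2; rewrite size_takel.
have hsuf : forall j, j <= D -> Defs.dist S (v j) y <= D - j.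
  move=> j hj; rewrite -hs in hj; case: (walk_split hp hj) => _ _ h3 h4.
  by have := dist_walk h3 (etrans h4 hl); rewrite size_drop hs.
have hdv : forall j, j <= D -> Defs.dist S (v j) y = D - j.
  move=> j hj; have := dist_tri S u (v j) y; have := hpre j hj; have := hsuf j hj.
  rewrite -/D; clear; lia.
have hdu : forall j, j <= D -> Defs.dist S (v j) u = j.
  move=> j hj; rewrite dist_sym; have := dist_tri S u (v j) y; have := hpre j hj; have := hsuf j hj.
  rewrite -/D; move: hj; clear; lia.
have h1 := halving heq hconn hbr hv hdv.
pose w j := v (D - j).
have hw : forall j, j < D -> uadj S (w j) (w j.+1).
  move=> j hj; rewrite /w uadj_sym.
  have -> : D - j = (D - j.+1).+1 by move: hj; clear; lia.
  by apply: hv; move: hj; clear; lia.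
have hdw : forall j, j <= D -> Defs.dist S (w j) u = D - j.
  by move=> j hj; rewrite /w hdu // leq_subr.
have h2 := halving heq hconn hbr hw hdw.
set s1 := \sum_(i < D.-1) _ in h1; set s2 := \sum_(i < D.-1) _ in h2.
have hs12 : D - 2 <= s1 + s2.
  case hD : D => [|[|m]] //=.
  have e1 : s1 = ((v 1 \in S (v 0)) : nat) + \sum_(i < m) ((v i.+2 \in S (v i.+1)) : nat).
    by rewrite /s1 hD /= big_ord_recl.
  have e2 : s2 = \sum_(i < m.+1) ((v i.+1 \in S (v i.+2)) : nat).
    rewrite /s2 hD /= (reindex_inj (@rev_ord_inj m.+1)) /=.
    apply: eq_bigr => i _; rewrite /w hD /=.
    have hi := ltn_ord i.
    have -> : m.+2 - (m.+1 - i.+1).+1 = i.+1 by move: hi; clear; lia.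
    by have -> : m.+2 - (m.+1 - i.+1) = i.+2 by move: hi; clear; lia.
  rewrite e1 e2 big_ord_recr /=.
  have : m <= \sum_(i < m) (((v i.+2 \in S (v i.+1)) : nat) + ((v i.+1 \in S (v i.+2)) : nat)).
    rewrite -{1}(card_ord m) -sum1_card; apply: leq_sum => i _.
    have hu : uadj S (v i.+1) (v i.+2) by apply: hv; rewrite hD; have := ltn_ord i; clear; lia.
    by move: hu; rewrite /uadj; case: (_ \in _); case: (_ \in _).
  rewrite big_split /=; clear; lia.
apply: (leq_trans (leq_pexp2l _ hs12)) => //.
by rewrite expnD; apply: leq_mul.
Qed.

End Pair.


Lemma expn_pow k : expn 2 k = Nat.pow 2 k.
Proof. by elim: k => // k IH; rewrite expnS IH. Qed.

Lemma ln_le' x y : (0 < x)%R -> (x <= y)%R -> (ln x <= ln y)%R.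
Proof.
move=> hx hxy; case: (Rle_lt_or_eq_dec _ _ hxy) => h.
- by apply: Rlt_le; apply: ln_increasing.
- by rewrite h; apply: Rle_refl.
Qed.

Lemma real_bound (n D : nat) : 2 <= n -> expn 2 (D - 2) <= n * n ->
  (INR D <= 4 * log2 (INR n))%R.
Proof.
move=> hn hD.
have hn' : (2 <= INR n)%R by have := le_INR 2 n (elimT leP hn); simpl; lra.
have hl2 : (0 < ln 2)%R by rewrite -ln_1; apply: ln_increasing; lra.
have hln : (ln 2 <= ln (INR n))%R by apply: ln_le'; lra.
have hR : (INR (expn 2 (D - 2)) <= INR (n * n))%R by apply: le_INR; apply/leP.
rewrite expn_pow pow_INR mult_INR in hR.
have h2 : INR 2 = 2%R by simpl; lra.
rewrite h2 in hR.
have hlog : (INR (D - 2) * ln 2 <= 2 * ln (INR n))%R.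
  rewrite -ln_pow; last lra.
  have -> : (2 * ln (INR n) = ln (INR n * INR n))%R by rewrite ln_mult; lra.
  apply: ln_le' => //; apply: pow_lt; lra.
have hD' : (INR D * ln 2 <= 4 * ln (INR n))%R.
  case: (leqP 2 D) => hd.
  - rewrite minus_INR in hlog; last by apply/leP.
    have : INR 2 = 2%R by simpl; lra.
    move=> e; rewrite e in hlog; nra.
  - have : (INR D <= 1)%R by have := le_INR D 1 (elimT leP (hd : D <= 1)); simpl; lra.
    move=> h1; have := pos_INR D; nra.
rewrite /log2; apply: (Rmult_le_reg_r (ln 2)) => //.
rewrite Rmult_assoc /Rdiv Rmult_assoc Rinv_l; lra.
Qed.

Theorem mainTheorem4 :
  exists C : R, (0 < C)%R /\
    forall (n : nat) (b : 'I_n -> nat) (S : profile n),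
      2 <= n ->
      (forall i, b i <= n - 1) ->
      \sum_(i < n) b i = n - 1 ->
      sum_equilibrium b S ->
      (INR (diameter S) <= C * log2 (INR n))%R.
Proof.
exists 4%R; split; first lra.
move=> n b S hn _ hsum heq.
apply: real_bound => //.
rewrite /diameter.
apply: (big_ind (fun x => expn 2 (x - 2) <= n * n)).
- by rewrite expn0 muln_gt0 andbb; apply: leq_trans hn.
- by move=> x y hx hy /=; rewrite /maxn; case: ltnP.
- move=> u _; apply: (big_ind (fun x => expn 2 (x - 2) <= n * n)).
  + by rewrite expn0 muln_gt0 andbb; apply: leq_trans hn.
  + by move=> x y hx hy /=; rewrite /maxn; case: ltnP.
  + by move=> y _; apply: pair_bound heq hsum.
Qed.
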